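(* Let $n=2k+1$ with $k\ge 1$. Then $W=\{a_1,a_{k+1}\}$ is a local resolving set of $U_n$.
   Context: For $n\ge 3$, $U_n$ is the graph with vertex set $\{a_i,b_i,c_i,d_i,e_i : 1\le i\le n\}$ and edge set $\{a_ia_{i+1}, b_ib_{i+1}, e_ie_{i+1}, a_ib_i, b_ic_i, c_id_i, d_ie_i, c_{i+1}d_i : 1\le i\le n\}$, indices taken modulo $n$. A vertex $w$ resolves $u,v$ if $d(u,w)\neq d(v,w)$ ($d$ the graph distance). A set $W$ is a local resolving set if every two adjacent vertices are resolved by some element of $W$. *)

(* Defs.v *)
From mathcomp Require Import all_boot.
Set Implicit Arguments. Unset Strict Implicit. Unset Printing Implicit Defensive.

Section Graph.
Variable V : finType.
Variable adj : rel V.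

Definition walkb (u v : V) (m : nat) : bool :=
  [exists p : m.-tuple V, path adj u p && (last u p == v)].

(* graph distance: the least m with a walk of length m from u to v.
   (Shortest walks have length < #|V|; if v is unreachable the value is #|V|,
   which never happens for the connected graphs considered here.) *)
Definition gdist (u v : V) : nat := find (walkb u v) (iota 0 #|V|).

Definition resolves (w u v : V) : Prop := gdist u w <> gdist v w.

Definition local_resolving (W : {set V}) : Prop :=
  forall u v : V, adj u v -> exists2 w, w \in W & resolves w u v.
End Graph.

(* Vertex (p, i) with p : 'I_5 encodes the letter (0=a,1=b,2=c,3=d,4=e) and
   i : 'I_n encodes the index, 0-based: (p,i) stands for x_{i+1}. *)
Definition Uvert (n : nat) := ('I_5 * 'I_n)%type.

Definition isucc (n : nat) (i j : 'I_n) : bool := (j : nat) == (i.+1 %% n).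

Definition Uarc (n : nat) (x y : Uvert n) : bool :=
  let p : nat := x.1 in let i := x.2 in
  let q : nat := y.1 in let j := y.2 in
  [|| [&& p == 0, q == 0 & isucc i j],
      [&& p == 1, q == 1 & isucc i j],
      [&& p == 4, q == 4 & isucc i j],
      [&& p == 0, q == 1 & i == j],
      [&& p == 1, q == 2 & i == j],
      [&& p == 2, q == 3 & i == j],
      [&& p == 3, q == 4 & i == j]
    | [&& p == 3, q == 2 & isucc i j]].

Definition Uadj (n : nat) : rel (Uvert n) := fun x y => Uarc x y || Uarc y x.

Definition vA (n : nat) (i : 'I_n) : Uvert n := (ord0, i).

(* Main.v *)
Require Import Defs.
From mathcomp Require Import all_boot zify.

Lemma find_iota_eq (P : pred nat) m N : m < N -> P m -> (forall i, i < m -> ~~ P i) ->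
  find P (iota 0 N) = m.
Proof.
move=> hmN hP hlt.
have -> : iota 0 N = iota 0 m ++ m :: iota m.+1 (N - m.+1).
  have -> : N = m + (N - m.+1).+1 by lia.
  by rewrite iotaD /= add0n; do 3 f_equal; lia.
rewrite find_cat.
have -> : has P (iota 0 m) = false.
  apply/negbTE/hasPn => i; rewrite mem_iota => /andP [_ hi]; apply: hlt; lia.
by rewrite size_iota /= hP addn0.
Qed.

Lemma gdist_pot (V : finType) (adj : rel V) (f : V -> nat) (w u : V) :
  (forall x y, adj x y -> f x <= f y + 1) ->
  (forall x, f x = 0 -> x = w) -> f w = 0 ->
  (forall x, 0 < f x -> exists y, adj x y /\ f y = (f x).-1) ->
  f u < #|V| -> gdist adj u w = f u.
Proof.
move=> lip z0 fw0 desc hu.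
apply: find_iota_eq => //.
- have: forall m x, f x = m -> exists p : seq V, [/\ size p = m, path adj x p & last x p = w].
    elim=> [|m IH] x hx; first by exists [::]; rewrite (z0 _ hx).
    have [|y [hxy hy]] := desc x; first by rewrite hx.
    have [|p [h1 h2 h3]] := IH y; first by rewrite hy hx.
    by exists (y :: p); rewrite /= hxy h1 h2 h3.
  move=> /(_ (f u) u erefl) [p [h1 h2 h3]].
  apply/existsP; exists (@Tuple _ _ p (introT eqP h1)); by rewrite /= h2 h3 eqxx.
- move=> i hi; apply/existsP => -[t /andP [hp /eqP hl]].
  suff: f u <= size t + f w by rewrite size_tuple fw0; lia.
  rewrite -hl; clear hl hu hi; elim: (tval t) u hp => [|y p IH] x /=; first by [] || lia.
  case/andP => hxy /IH h; have := lip _ _ hxy; lia.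
Qed.
Definition fpot n (D : nat -> nat) (x : Uvert n) : nat :=
  match (x.1 : nat) with
  | 0 => D x.2
  | 1 => D x.2 + 1
  | 2 => D x.2 + 2
  | 3 => minn (D x.2) (D (x.2.+1 %% n)) + 3
  | _ => minn (D x.2) (D (x.2.+1 %% n)) + 4
  end.

Arguments fpot {n}.

Definition D0 n (i : nat) := minn i (n - i).
Definition Dk k (i : nat) := (i - k) + (k - i).


Lemma succ_cases n (i : nat) : i < n -> (i.+1 %% n = i.+1 /\ i.+1 < n) \/ (i.+1 %% n = 0 /\ i.+1 = n).
Proof.
move=> hi; case: (ltnP i.+1 n) => h; first by left; rewrite modn_small.
right; have e : i.+1 = n by lia.
by rewrite e modnn.
Qed.

Ltac arcs H :=
  repeat (case/orP: H => H);
  case/and3P: H => /eqP hp /eqP hq /eqP hij.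

Ltac modc i n := let h1 := fresh "h" in let h2 := fresh "h" in
  have [[h1 h2]|[h1 h2]] := succ_cases _ _ (ltn_ord i); rewrite ?h1.

Lemma lip_arc n (D : nat -> nat) (x y : Uvert n) :
  (forall i : 'I_n, D (i.+1 %% n) <= D i + 1 /\ D i <= D (i.+1 %% n) + 1) ->
  Uarc x y -> fpot D x <= fpot D y + 1 /\ fpot D y <= fpot D x + 1.
Proof.
move=> hL; case: x y => [p i] [q j]; rewrite /Uarc /isucc /= => H.
have := hL i; have := hL j.
arcs H; rewrite /fpot /= hp hq; try subst j; try rewrite hij;
lia.
Qed.

Lemma desc_f n (D : nat -> nat) (hn : 0 < n)
  (hDesc : forall i : 'I_n, 0 < D i -> exists i' : 'I_n,
      (((i' : nat) == i.+1 %% n) || ((i : nat) == i'.+1 %% n)) && (D i' == (D i).-1))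
  (x : Uvert n) : 0 < fpot D x -> exists y, Uadj x y /\ fpot D y = (fpot D x).-1.
Proof.
case: x => [[[|[|[|[|[|p]]]]] hp] i]; rewrite /fpot /= => hpos.
- have [i' /andP [h1 /eqP h2]] := hDesc i hpos.
  exists (@Ordinal 5 0 isT, i'); split => //; rewrite /Uadj /Uarc /isucc /=.
  by case/orP: h1 => ->; rewrite ?orbT.
- exists (@Ordinal 5 0 isT, i); split; last by rewrite /fpot /=; lia.
  by rewrite /Uadj /Uarc /isucc /= eqxx ?orbT.
- exists (@Ordinal 5 1 isT, i); split; last by rewrite /fpot /=; lia.
  by rewrite /Uadj /Uarc /isucc /= eqxx ?orbT.
- case: (leqP (D i) (D (i.+1 %% n))) => hle.
  + exists (@Ordinal 5 2 isT, i); split; last by rewrite /fpot /=; lia.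
    by rewrite /Uadj /Uarc /isucc /= eqxx ?orbT.
  + exists (@Ordinal 5 2 isT, Ordinal (ltn_pmod i.+1 hn)); split; last by rewrite /fpot /=; lia.
    by rewrite /Uadj /Uarc /isucc /= eqxx ?orbT.
- exists (@Ordinal 5 3 isT, i); split; last by rewrite /fpot /=; lia.
  by rewrite /Uadj /Uarc /isucc /= eqxx ?orbT.
- by [].
Qed.

Lemma zero_f n (D : nat -> nat) (j : 'I_n)
  (hZ : forall i : 'I_n, D i = 0 -> i = j) (x : Uvert n) :
  fpot D x = 0 -> x = (ord0, j).
Proof.
case: x => [[[|[|[|[|[|p]]]]] hp] i]; rewrite /fpot /= => h0; try lia.
by rewrite (hZ _ h0); congr pair; apply: val_inj.
Qed.
Lemma D0_facts k i : 0 < k -> i < (2*k).+1 ->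
  let n := (2*k).+1 in let s := i.+1 %% n in let D := D0 n in
  [/\ D s <= D i + 1, D i <= D s + 1, (D i = D s -> i = k),
      (D s < D i -> k < i) & (D i < D s -> i < k)].
Proof.
move=> hk hi n s D; rewrite /D /s /n /D0.
have [[-> h2]|[-> h2]] := succ_cases _ _ hi; split; lia.
Qed.

Lemma Dk_facts k i : 0 < k -> i < (2*k).+1 ->
  let n := (2*k).+1 in let s := i.+1 %% n in let D := Dk k in
  [/\ D s <= D i + 1, D i <= D s + 1, (D i = D s -> i = 2*k),
      (D s < D i -> i < k) & (D i < D s -> k <= i)].
Proof.
move=> hk hi n s D; rewrite /D /s /n /Dk.
have [[-> h2]|[-> h2]] := succ_cases _ _ hi; split; lia.
Qed.

Lemma M0_fact k i : 0 < k -> i < (2*k).+1 ->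
  let n := (2*k).+1 in let s := i.+1 %% n in let D := D0 n in
  minn (D i) (D s) = minn (D s) (D (s.+1 %% n)) -> i = 2 * k.
Proof.
move=> hk hi n s D; rewrite /D /s /n /D0.
have [[-> h2]|[-> h2]] := succ_cases _ _ hi.
- have [[-> h3]|[-> h3]] := succ_cases _ _ h2; lia.
- rewrite modn_small //; lia.
Qed.

Lemma Mk_fact k i : 0 < k -> i < (2*k).+1 ->
  let n := (2*k).+1 in let s := i.+1 %% n in let D := Dk k in
  minn (D i) (D s) = minn (D s) (D (s.+1 %% n)) -> i = k.-1.
Proof.
move=> hk hi n s D; rewrite /D /s /n /Dk.
have [[-> h2]|[-> h2]] := succ_cases _ _ hi.
- have [[-> h3]|[-> h3]] := succ_cases _ _ h2; lia.
- rewrite modn_small //; lia.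
Qed.
Lemma D0_desc k (hk : 0 < k) (i : 'I_(2*k).+1) : 0 < D0 (2*k).+1 i ->
  exists i' : 'I_(2*k).+1, (((i':nat) == i.+1 %% (2*k).+1) || ((i:nat) == i'.+1 %% (2*k).+1))
     && (D0 (2*k).+1 i' == (D0 (2*k).+1 i).-1).
Proof.
have hi := ltn_ord i; rewrite /D0 => hpos.
case: (leqP i k) => h.
- exists (inord i.-1); rewrite inordK; last lia.
  rewrite (modn_small (_ : i.-1.+1 < (2*k).+1)); last lia.
  apply/andP; split; last (apply/eqP; lia).
  apply/orP; right; apply/eqP; lia.
- exists (inord (i.+1 %% (2*k).+1)); rewrite inordK; last by rewrite ltn_pmod.
  rewrite eqxx /=; apply/eqP.
  have [[-> h2]|[-> h2]] := succ_cases _ _ hi; lia.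
Qed.

Lemma Dk_desc k (hk : 0 < k) (i : 'I_(2*k).+1) : 0 < Dk k i ->
  exists i' : 'I_(2*k).+1, (((i':nat) == i.+1 %% (2*k).+1) || ((i:nat) == i'.+1 %% (2*k).+1))
     && (Dk k i' == (Dk k i).-1).
Proof.
have hi := ltn_ord i; rewrite /Dk => hpos.
case: (leqP k i) => h.
- exists (inord i.-1); rewrite inordK; last lia.
  rewrite (modn_small (_ : i.-1.+1 < (2*k).+1)); last lia.
  apply/andP; split; last (apply/eqP; lia).
  apply/orP; right; apply/eqP; lia.
- exists (inord (i.+1 %% (2*k).+1)); rewrite inordK; last by rewrite ltn_pmod.
  rewrite eqxx /=; apply/eqP.
  have [[-> h2]|[-> h2]] := succ_cases _ _ hi; lia.
Qed.

Lemma fpot_le n D (x : Uvert n) : fpot D x <= D x.2 + 4.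
Proof. case: x => [[[|[|[|[|[|p]]]]] hp] i]; rewrite /fpot /=; lia. Qed.

Lemma gdist_D k (hk : 0 < k) (D : nat -> nat) (j : 'I_(2*k).+1)
  (hL : forall i : 'I_(2*k).+1, D (i.+1 %% (2*k).+1) <= D i + 1 /\ D i <= D (i.+1 %% (2*k).+1) + 1)
  (hZ : forall i : 'I_(2*k).+1, D i = 0 -> i = j)
  (hDesc : forall i : 'I_(2*k).+1, 0 < D i -> exists i' : 'I_(2*k).+1,
      (((i' : nat) == i.+1 %% (2*k).+1) || ((i : nat) == i'.+1 %% (2*k).+1)) && (D i' == (D i).-1))
  (hj : D j = 0) (hB : forall i : 'I_(2*k).+1, D i < (2*k).+1) (u : Uvert (2*k).+1) :
  gdist (@Uadj (2*k).+1) u (vA j) = fpot D u.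
Proof.
apply: gdist_pot.
- move=> x y /orP [h|h]; have := @lip_arc _ _ _ _ hL h; lia.
- exact: zero_f.
- by rewrite /fpot /= hj.
- exact: desc_f.
- rewrite card_prod !card_ord; have := fpot_le _ D u; have := hB u.2; lia.
Qed.


Lemma arc_res k (hk : 0 < k) (x y : Uvert (2*k).+1) : Uarc x y ->
  fpot (D0 (2*k).+1) x <> fpot (D0 (2*k).+1) y \/ fpot (Dk k) x <> fpot (Dk k) y.
Proof.
case: x y => [p i] [q j]; rewrite /Uarc /isucc /= => H.
have := D0_facts _ _ hk (ltn_ord i); have := Dk_facts _ _ hk (ltn_ord i).
have := M0_fact _ _ hk (ltn_ord i); have := Mk_fact _ _ hk (ltn_ord i).
cbv zeta => hM1 hM0 [a1 a2 a3 a4 a5] [b1 b2 b3 b4 b5].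
arcs H; rewrite /fpot /= hp hq; try subst j; try rewrite hij.
- clear hM1 hM0 a4 a5 b4 b5; lia.
- clear hM1 hM0 a4 a5 b4 b5; lia.
- clear a3 a4 a5 b3 b4 b5; lia.
- left; lia.
- left; lia.
- clear hM1 hM0 a3 a5 b3 b5; lia.
- left; lia.
- clear hM1 hM0 a3 a4 b3 b4; lia.
Qed.

Theorem lemma4p3 (k : nat) (hk : 1 <= k) :
  local_resolving (@Uadj (2 * k).+1)
    [set vA (inord 0 : 'I_(2 * k).+1); vA (inord k : 'I_(2 * k).+1)].
Proof.
have g0 : forall u, gdist (@Uadj (2*k).+1) u (vA (inord 0)) = fpot (D0 (2*k).+1) u.
  move=> u; apply: gdist_D => //.
  - by move=> i; have [] := D0_facts _ _ hk (ltn_ord i).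
  - move=> i; rewrite /D0 => h; apply: val_inj; rewrite /= inordK //; have := ltn_ord i; lia.
  - exact: D0_desc.
  - by rewrite /D0 inordK.
  - move=> i; rewrite /D0; have := ltn_ord i; lia.
have gk : forall u, gdist (@Uadj (2*k).+1) u (vA (inord k)) = fpot (Dk k) u.
  move=> u; apply: gdist_D => //.
  - by move=> i; have [] := Dk_facts _ _ hk (ltn_ord i).
  - move=> i; rewrite /Dk => h; apply: val_inj; rewrite /= inordK; have := ltn_ord i; lia.
  - exact: Dk_desc.
  - rewrite /Dk inordK; lia.
  - move=> i; rewrite /Dk; have := ltn_ord i; lia.
move=> u v /orP [h|h].
- case: (arc_res _ hk _ _ h) => hr.
  + exists (vA (inord 0)); first by rewrite !inE eqxx.
    by rewrite /resolves !g0.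
  + exists (vA (inord k)); first by rewrite !inE eqxx orbT.
    by rewrite /resolves !gk.
- case: (arc_res _ hk _ _ h) => hr.
  + exists (vA (inord 0)); first by rewrite !inE eqxx.
    by rewrite /resolves !g0 => e; apply: hr.
  + exists (vA (inord k)); first by rewrite !inE eqxx orbT.
    by rewrite /resolves !gk => e; apply: hr.
Qed.
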